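(* Let $M$ be a monoid in $\mathcal{C}$. Then $M$ is finitary if and only if every face submonoid of $M$ is finitary; likewise, $M$ is weakly finitary if and only if every face submonoid of $M$ is weakly finitary.
   Context: Convention: all monoids are commutative, cancellative, and reduced, written additively; $M^\bullet=M\setminus\{0\}$. $\mathcal{C}$ is the class of monoids isomorphic to a submonoid of a free commutative monoid of finite rank (equivalently, of $(\mathbb{N}^d,+)$). $M$ is regarded as a submonoid of $V=\mathbb{R}\otimes_\mathbb{Z}\mathrm{gp}(M)$; $\mathsf{cone}_V(M)$ is the set of finite nonnegative linear combinations of elements of $M$. A face of a cone $C$ is a cone $F\subseteq C$ such that whenever $x,y\in C$ and $F$ meets the open segment between $x$ and $y$, then $x,y\in F$; a face submonoid is $M\cap F$ for a face $F$ of $\mathsf{cone}_V(M)$. A monoid is a BFM if every element is a sum of atoms and each element has a finite set of factorization lengths. $M$ is finitary if it is a BFM and there exist a finite $S\subseteq M$ and a positive integer $n$ with $nM^\bullet\subseteq S+M$, where $nM^\bullet=\{x_1+\dots+x_n: x_i\in M^\bullet\}$. $M$ is weakly finitary if there exist a finite $S\subseteq M$ and a positive integer $n$ with $nx\in S+M$ for all $x\in M^\bullet$. *)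

(* Defs.v *)
From mathcomp Require Import all_boot.
From Stdlib Require Import Reals.
Set Implicit Arguments. Unset Strict Implicit. Unset Printing Implicit Defensive.

Definition nvec (d : nat) := 'I_d -> nat.
Definition nv0 (d : nat) : nvec d := fun _ => 0%N.
Arguments nv0 d : clear implicits.
Definition nvadd (d : nat) (x y : nvec d) : nvec d := fun i => (x i + y i)%N.
Definition nvscale (d : nat) (n : nat) (x : nvec d) : nvec d := fun i => (n * x i)%N.
Definition nvsum (d : nat) (l : seq (nvec d)) : nvec d := foldr (@nvadd d) (nv0 d) l.

(** A submonoid of (N^d, +): a monoid in the class C. *)
Definition is_submonoid (d : nat) (M : nvec d -> Prop) : Prop :=
  M (nv0 d) /\ (forall x y, M x -> M y -> M (nvadd x y)).

(** Atoms of M (M is reduced, so non-units = nonzero elements). *)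
Definition is_atom (d : nat) (M : nvec d -> Prop) (a : nvec d) : Prop :=
  M a /\ a <> nv0 d /\
  (forall y z, M y -> M z -> a = nvadd y z -> y = nv0 d \/ z = nv0 d).

Definition is_factorization (d : nat) (M : nvec d -> Prop) (x : nvec d)
  (l : seq (nvec d)) : Prop :=
  List.Forall (is_atom M) l /\ nvsum l = x.

Definition is_BFM (d : nat) (M : nvec d -> Prop) : Prop :=
  forall x, M x ->
    (exists l, is_factorization M x l) /\
    (exists s : seq nat, forall l, is_factorization M x l -> List.In (size l) s).

(** finitary: BFM and n M^bullet ⊆ S + M for a finite S ⊆ M and n >= 1. *)
Definition finitary (d : nat) (M : nvec d -> Prop) : Prop :=
  is_BFM M /\
  exists (S : seq (nvec d)) (n : nat),
    List.Forall M S /\ (0 < n)%N /\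
    forall xs : seq (nvec d), size xs = n ->
      List.Forall (fun x => M x /\ x <> nv0 d) xs ->
      exists s m, List.In s S /\ M m /\ nvsum xs = nvadd s m.

Definition weakly_finitary (d : nat) (M : nvec d -> Prop) : Prop :=
  exists (S : seq (nvec d)) (n : nat),
    List.Forall M S /\ (0 < n)%N /\
    forall x, M x -> x <> nv0 d ->
      exists s m, List.In s S /\ M m /\ nvscale n x = nvadd s m.

(** Real vectors: V = R ⊗ gp(M) is identified with its (isomorphic) image,
    the R-span of M inside R^d. *)
Definition rvec (d : nat) := 'I_d -> R.
Definition rv0 (d : nat) : rvec d := fun _ => 0%R.
Arguments rv0 d : clear implicits.
Definition rvadd (d : nat) (x y : rvec d) : rvec d := fun i => (x i + y i)%R.
Definition rvscale (d : nat) (c : R) (x : rvec d) : rvec d := fun i => (c * x i)%R.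
Definition embed (d : nat) (x : nvec d) : rvec d := fun i => INR (x i).

Definition cone (d : nat) (M : nvec d -> Prop) (v : rvec d) : Prop :=
  exists l : seq (R * nvec d),
    List.Forall (fun p => (0 <= p.1)%R /\ M p.2) l /\
    v = foldr (fun p acc => rvadd (rvscale p.1 (embed p.2)) acc) (rv0 d) l.

Definition is_cone (d : nat) (F : rvec d -> Prop) : Prop :=
  F (rv0 d) /\
  (forall x y, F x -> F y -> F (rvadd x y)) /\
  (forall c x, (0 <= c)%R -> F x -> F (rvscale c x)).

Definition is_face (d : nat) (C F : rvec d -> Prop) : Prop :=
  is_cone F /\ (forall x, F x -> C x) /\
  (forall x y t, C x -> C y -> (0 < t < 1)%R ->
     F (rvadd (rvscale (1 - t) x) (rvscale t y)) -> F x /\ F y).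

Definition face_submonoid (d : nat) (M : nvec d -> Prop) (F : rvec d -> Prop)
  : nvec d -> Prop := fun x => M x /\ F (embed x).

(* Main.v *)
Require Import Defs.
From mathcomp Require Import all_boot.
From Stdlib Require Import Reals.
From Stdlib Require Import Lra Classical FunctionalExtensionality PropExtensionality.

Section Aux.
Variable d : nat.

Lemma embed_add (x y : nvec d) : embed (nvadd x y) = rvadd (embed x) (embed y).
Proof.
  apply functional_extensionality => i; rewrite /embed /rvadd /nvadd.
  rewrite -plusE plus_INR //.
Qed.

Lemma embed_0 : embed (nv0 d) = rv0 d.
Proof. by apply functional_extensionality => i. Qed.

Lemma filter_ex {A : Type} (P : A -> Prop) (S : seq A) :
  exists S', forall s, List.In s S' <-> List.In s S /\ P s.
Proof.
  elim: S => [|a S [S' HS']].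
    exists [::]; intros s; simpl; tauto.
  case: (classic (P a)) => Pa.
  - exists (a :: S'); intros s; simpl; rewrite HS'; split.
    + intros [H|H]; [subst; tauto | tauto].
    + intros [[H|H] H']; tauto.
  - exists S'; intros s; simpl; rewrite HS'; split; first tauto.
    intros [[H|H] H']; [subst; tauto | tauto].
Qed.

Lemma cone_elem (M : nvec d -> Prop) (c : R) x : (0 <= c)%R -> M x ->
  cone M (rvscale c (embed x)).
Proof.
  move=> Hc Hx; exists [:: (c, x)]; split; first by constructor.
  apply functional_extensionality => i /=; rewrite /rvadd /rv0; ring.
Qed.

Lemma foldr_cone_app (l1 l2 : seq (R * nvec d)) :
  foldr (fun p acc => rvadd (rvscale p.1 (embed p.2)) acc) (rv0 d) (l1 ++ l2) =
  rvadd (foldr (fun p acc => rvadd (rvscale p.1 (embed p.2)) acc) (rv0 d) l1)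
        (foldr (fun p acc => rvadd (rvscale p.1 (embed p.2)) acc) (rv0 d) l2).
Proof.
  elim: l1 => [|p l1 IH] /=.
  - apply functional_extensionality => i; rewrite /rvadd /rv0; ring.
  - rewrite IH; apply functional_extensionality => i; rewrite /rvadd; ring.
Qed.

Lemma foldr_cone_scale c (l : seq (R * nvec d)) :
  foldr (fun p acc => rvadd (rvscale p.1 (embed p.2)) acc) (rv0 d)
    (map (fun p => ((c * p.1)%R, p.2)) l) =
  rvscale c (foldr (fun p acc => rvadd (rvscale p.1 (embed p.2)) acc) (rv0 d) l).
Proof.
  elim: l => [|p l IH] /=.
  - apply functional_extensionality => i; rewrite /rvscale /rv0; ring.
  - rewrite IH; apply functional_extensionality => i; rewrite /rvadd /rvscale; ring.
Qed.

Lemma cone_face (M : nvec d -> Prop) : is_face (cone M) (cone M).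
Proof.
  split; last by split=> // x y t Hx Hy _ _.
  split; first by exists [::]; split.
  split.
  - move=> x y [l1 [H1 ->]] [l2 [H2 ->]]; exists (l1 ++ l2); split.
    + by apply List.Forall_app.
    + by rewrite foldr_cone_app.
  - move=> c x Hc [l [Hl ->]]; exists (map (fun p => ((c * p.1)%R, p.2)) l); split.
    + elim: Hl => [|p l' [Hp1 Hp2] _ IH] /=; constructor => //.
      split => //=; apply Rmult_le_pos => //.
    + by rewrite foldr_cone_scale.
Qed.

Lemma face_self (M : nvec d -> Prop) : face_submonoid M (cone M) = M.
Proof.
  apply functional_extensionality => x; apply propositional_extensionality.
  rewrite /face_submonoid; split; first tauto.
  move=> Hx; split => //.
  have -> : embed x = rvscale 1 (embed x).
    by apply functional_extensionality => i; rewrite /rvscale; ring.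
  apply cone_elem => //; lra.
Qed.

Section Face.
Variables (M : nvec d -> Prop) (HM : is_submonoid M) (F : rvec d -> Prop)
  (HF : is_face (cone M) F).
Let N := face_submonoid M F.

Lemma N_div {x y} : M x -> M y -> N (nvadd x y) -> N x /\ N y.
Proof.
  move=> Hx Hy [_ Hxy].
  case: HF => [[H0 [Hadd Hsc]] [Hsub Hface]].
  have Hfx := @cone_elem M 2 x ltac:(lra) Hx.
  have Hfy := @cone_elem M 2 y ltac:(lra) Hy.
  have Heq : rvadd (rvscale (1 - / 2) (rvscale 2 (embed x)))
         (rvscale (/ 2) (rvscale 2 (embed y))) = embed (nvadd x y).
    rewrite embed_add; apply functional_extensionality => i.
    rewrite /rvadd /rvscale; field.
  have [F1 F2] : F (rvscale 2 (embed x)) /\ F (rvscale 2 (embed y)).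
    apply: (Hface _ _ (/2)%R Hfx Hfy); first lra.
    by rewrite Heq.
  have E : forall z : nvec d, embed z = rvscale (/2) (rvscale 2 (embed z)).
    by move=> z; apply functional_extensionality => i; rewrite /rvscale; field.
  split; split => //; rewrite E; apply Hsc => //; lra.
Qed.

Lemma N_M {x} : N x -> M x.
Proof. by case. Qed.

Lemma N_0 : N (nv0 d).
Proof. split; first by case: HM. rewrite embed_0; by case: HF => [[]]. Qed.

Lemma N_add {x y} : N x -> N y -> N (nvadd x y).
Proof.
  move=> [Mx Fx] [My Fy]; split; first by case: HM => _; apply.
  rewrite embed_add; case: HF => [[_ [Hadd _]] _]; by apply Hadd.
Qed.

Lemma M_sum {l} : List.Forall M l -> M (nvsum l).
Proof.
  elim=> [|a l' Ha _ IH] /=; first by case: HM.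
  by case: HM => _; apply.
Qed.

Lemma N_sum {l} : List.Forall N l -> N (nvsum l).
Proof. elim=> [|a l' Ha _ IH] /=; [exact N_0 | exact: N_add]. Qed.

Lemma N_scale {n x} : N x -> N (nvscale n x).
Proof.
  move=> Hx; elim: n => [|n IH].
  - have -> : nvscale 0 x = nv0 d by apply functional_extensionality.
    exact N_0.
  - have -> : nvscale n.+1 x = nvadd x (nvscale n x).
      by apply functional_extensionality => i; rewrite /nvscale /nvadd mulSn.
    exact: N_add.
Qed.

Lemma atom_N {a} : is_atom N a -> is_atom M a.
Proof.
  move=> [Na [nz Ha]]; split; first exact: N_M.
  split => // y z My Mz E.
  have [Ny Nz] : N y /\ N z by apply N_div => //; rewrite -E.
  exact: Ha.
Qed.

Lemma fact_sum_N {l} : List.Forall M l -> N (nvsum l) -> List.Forall N l.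
Proof.
  elim=> [|a l' Ha Hl IH] //= Hs.
  have [Na Nl] := N_div Ha (M_sum Hl) Hs.
  constructor => //; exact: IH.
Qed.

Lemma atoms_N {l} : List.Forall (is_atom M) l -> N (nvsum l) -> List.Forall (is_atom N) l.
Proof.
  move=> Hl Hs.
  have HMl : List.Forall M l by apply: List.Forall_impl Hl => a [].
  have HNl := fact_sum_N HMl Hs.
  elim: Hl HNl {Hs HMl} => [|a l' [Ma [nz Ha]] _ IH] HNl; first by [].
  inversion HNl; subst; constructor; last exact: IH.
  split => //; split => // y z Ny Nz E; apply Ha => //; exact: N_M.
Qed.

Lemma face_finitary : finitary M -> finitary N.
Proof.
  move=> [HB [S [n [HS [Hn Hfin]]]]]; split.
  - move=> x Nx; have [[l [Hl Hs]] [s Hls]] := HB x (N_M Nx); split.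
    + exists l; split => //; apply atoms_N => //; by rewrite Hs.
    + exists s => l' [Hl' Hs']; apply Hls; split => //.
      by apply: List.Forall_impl Hl' => a; exact: atom_N.
  - have [S' HS'] := filter_ex N S.
    exists S', n; split; last split => //.
    + apply List.Forall_forall => s /HS' []; done.
    + move=> xs Hsz Hxs.
      have Hxs' : List.Forall (fun x => M x /\ x <> nv0 d) xs.
        by apply: List.Forall_impl Hxs => x [/N_M].
      have [s [m [Hs [Mm E]]]] := Hfin xs Hsz Hxs'.
      have Ms : M s by move: HS => /List.Forall_forall; apply.
      have NE : N (nvadd s m).
        rewrite -E; apply N_sum; by apply: List.Forall_impl Hxs => x [].
      have [Ns Nm] := N_div Ms Mm NE.
      exists s, m; split; first by apply HS'.
      by split.
Qed.

Lemma face_wfinitary : weakly_finitary M -> weakly_finitary N.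
Proof.
  move=> [S [n [HS [Hn Hfin]]]].
  have [S' HS'] := filter_ex N S.
  exists S', n; split; last split => //.
  + apply List.Forall_forall => s /HS' []; done.
  + move=> x Nx nz.
    have [s [m [Hs [Mm E]]]] := Hfin x (N_M Nx) nz.
    have Ms : M s by move: HS => /List.Forall_forall; apply.
    have NE : N (nvadd s m) by rewrite -E; exact: N_scale.
    have [Ns Nm] := N_div Ms Mm NE.
    exists s, m; split; first by apply HS'.
    by split.
Qed.

End Face.
End Aux.

Theorem mainTheorem16 (d : nat) (M : nvec d -> Prop) (HM : is_submonoid M) :
  (finitary M <->
     forall F : rvec d -> Prop, is_face (cone M) F -> finitary (face_submonoid M F)) /\
  (weakly_finitary M <->
     forall F : rvec d -> Prop, is_face (cone M) F -> weakly_finitary (face_submonoid M F)).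
Proof.
  split; split.
  - move=> H F HF; exact: face_finitary.
  - move=> H; rewrite -(@face_self d M); apply H; exact: cone_face.
  - move=> H F HF; exact: face_wfinitary.
  - move=> H; rewrite -(@face_self d M); apply H; exact: cone_face.
Qed.
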